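(* Let $F,S_1,\ldots,S_m,S_a$ be formulas and $1\le i\le m$. If $\emptyset[F,S_1,\ldots,S_{i-1},S_i,\ldots,S_m]=\emptyset[S_1,\ldots,S_{i-1},S_i,\ldots,S_m]$, then $\emptyset[F,S_1,\ldots,S_{i-1},S_a,S_i,\ldots,S_m]=\emptyset[S_1,\ldots,S_{i-1},S_a,S_i,\ldots,S_m]$.
   Context: Propositional models are truth assignments over a finite set of variables; a formula used where a set of models is expected stands for its set of models. A doxastic state is a sequence $[C(0),\ldots,C(k)]$ of nonempty, pairwise disjoint sets of models covering all models. The flat doxastic state $\emptyset$ is $[\text{all models}]$. Lexicographic revision: $C\,\mathrm{lex}(A) = [C(0)\cap A,\ldots,C(k)\cap A, C(0)\setminus A,\ldots,C(k)\setminus A]$, empty sets discarded. $\emptyset[T_1,\ldots,T_n]$ denotes $\emptyset$ revised lexicographically by $T_1$, then $T_2$, ..., then $T_n$. *)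

(* Defs.v *)
From mathcomp Require Import all_boot.
Set Implicit Arguments. Unset Strict Implicit. Unset Printing Implicit Defensive.

Definition model (n : nat) := {ffun 'I_n -> bool}.

Inductive formula (n : nat) : Type :=
| FVar of 'I_n
| FTrue
| FFalse
| FNot of formula n
| FAnd of formula n & formula n
| FOr of formula n & formula n.

Fixpoint holds n (w : model n) (f : formula n) : bool :=
  match f with
  | FVar x => w x
  | FTrue => true
  | FFalse => false
  | FNot g => ~~ holds w g
  | FAnd g h => holds w g && holds w h
  | FOr g h => holds w g || holds w h
  end.

Definition mods n (f : formula n) : {set model n} := [set w | holds w f].

(* A doxastic state: a sequence [C(0);...;C(k)] of sets of models. *)
Notation dstate n := (seq {set model n}).

Definition is_doxastic n (C : dstate n) : Prop :=
  [/\ all (fun X => X != set0) C,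
      (forall i j, i < size C -> j < size C -> i != j ->
          [disjoint nth set0 C i & nth set0 C j]) &
      (forall w : model n, has (fun X : {set model n} => w \in X) C)].

Definition flat n : dstate n := [:: [set: model n]].

Definition lex n (C : dstate n) (A : {set model n}) : dstate n :=
  [seq X <- [seq X :&: A | X <- C] ++ [seq X :\: A | X <- C] | X != set0].

(* emptyset[T1,...,Tn] : flat state revised successively by T1, ..., Tn. *)
Definition revise_seq n (Ts : seq (formula n)) : dstate n :=
  foldl (fun C T => lex C (mods T)) (flat n) Ts.

(* Main.v *)
Require Import Defs.
From mathcomp Require Import all_boot.
Set Implicit Arguments. Unset Strict Implicit.

Section Aux.
Variable n : nat.
Implicit Types (C : dstate n) (A X K : {set model n}) (L : seq (formula n)).

Definition step C A : dstate n := [seq K :&: A | K <- C] ++ [seq K :\: A | K <- C].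
Definition stepf C (T : formula n) := step C (mods T).
Definition Q L := foldl stepf [:: setT] L.

Lemma filter_map_nz (f : {set model n} -> {set model n}) C :
  f set0 = set0 ->
  [seq X <- [seq f K | K <- [seq K <- C | K != set0]] | X != set0] =
  [seq X <- [seq f K | K <- C] | X != set0].
Proof.
move=> f0; elim: C => //= K C IH.
have [->|nK] := eqVneq K set0; rewrite /= ?f0 ?eqxx /= ?IH //.
Qed.

Lemma lex_filter C A : lex [seq X <- C | X != set0] A = [seq X <- step C A | X != set0].
Proof.
by rewrite /lex /step !filter_cat !filter_map_nz ?set0I ?set0D.
Qed.

Lemma foldl_lex C L :
  foldl (fun C T => lex C (mods T)) [seq X <- C | X != set0] L =
  [seq X <- foldl stepf C L | X != set0].
Proof. by elim: L C => //= T L IH C; rewrite lex_filter IH. Qed.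

Lemma setT_nz : [set: model n] != set0.
Proof. by apply/set0Pn; exists [ffun=> true]; rewrite inE. Qed.

Lemma revE L : revise_seq L = [seq X <- Q L | X != set0].
Proof. by rewrite /revise_seq /Q -foldl_lex /= setT_nz. Qed.

Lemma revFE F L : revise_seq (F :: L) =
  [seq X <- foldl stepf [:: mods F; ~: mods F] L | X != set0].
Proof.
rewrite /revise_seq /=.
have -> : lex (flat n) (mods F) = [seq X <- [:: mods F; ~: mods F] | X != set0].
  by rewrite /lex /= setTI setTD.
by rewrite foldl_lex.
Qed.

Lemma pairs C L : foldl stepf C L = flatten [seq [seq X :&: K | X <- C] | K <- Q L].
Proof.
elim/last_ind: L => [|L A IH] /=.
  by rewrite cats0 -[LHS]map_id; apply: eq_map => X; rewrite setIT.
rewrite /Q !foldl_rcons -/(Q L) IH /stepf /step map_cat flatten_cat -!map_comp.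
by rewrite !map_flatten -!map_comp; congr (flatten _ ++ flatten _);
  apply: eq_map => K /=; rewrite -map_comp; apply: eq_map => X /=;
  rewrite ?setIA // !setDE setIA.
Qed.
End Aux.

Section Split.
Variable n : nat.
Variable F' : {set model n}.
Implicit Types (K : {set model n}) (C : dstate n).

Definition good K := (F' :&: K == set0) || (~: F' :&: K == set0).
Definition spl C := flatten [seq [seq X :&: K | X <- [:: F'; ~: F']] | K <- C].

Lemma hK K : F' :&: K :|: ~: F' :&: K = K.
Proof. by rewrite -setIUl setUCr setTI. Qed.

Lemma nzK K : (K != set0) = (F' :&: K != set0) || (~: F' :&: K != set0).
Proof.
rewrite -{1}[K](hK) -negb_and; congr (~~ _).
apply/eqP/andP => [e|[/eqP -> /eqP ->]]; last by rewrite setU0.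
by split; apply/eqP; apply/setP => x; move/setP: e => /(_ x); rewrite !inE; case: (x \in F'); case: (x \in K).
Qed.

Lemma split_le C : size [seq X <- C | X != set0] <= size [seq X <- spl C | X != set0].
Proof.
rewrite /spl; elim: C => //= K C IH; rewrite /=.
rewrite (nzK K).
have [a0|an] := eqVneq (F' :&: K) set0; have [b0|bn] := eqVneq (~: F' :&: K) set0;
  rewrite ?a0 ?b0 ?eqxx ?an ?bn /= ?ltnS //; exact: leqW.
Qed.

Lemma split_all C : [seq X <- spl C | X != set0] = [seq X <- C | X != set0] -> all good C.
Proof.
rewrite /spl; move/(congr1 size); elim: C => //= K C IH.
have := split_le C; rewrite /spl => le.
rewrite /good (nzK K).
have [a0|an] := eqVneq (F' :&: K) set0; have [b0|bn] := eqVneq (~: F' :&: K) set0;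
  rewrite ?a0 ?b0 ?eqxx ?an ?bn /= => e; try (by apply: IH; first [exact: e | case: e]).
by move: le; case: e => <-; rewrite ltnn.
Qed.

Lemma split_eq C : all good C -> [seq X <- spl C | X != set0] = [seq X <- C | X != set0].
Proof.
rewrite /spl; elim: C => //= K C IH /andP [g gC]; rewrite IH // /=.
have := hK K; move: g; rewrite /good.
by case/orP => /eqP e; rewrite e ?set0U ?setU0 => -> /=; rewrite eqxx //= cats0.
Qed.
End Split.


Definition Rs n (C' C : dstate n) :=
  forall K', K' \in C' -> exists2 K, K \in C & K' \subset K.

Lemma R_step n (C' C : dstate n) A : Rs C' C -> Rs (step C' A) (step C A).
Proof.
move=> h K'; rewrite mem_cat => /orP [/mapP [K1 K1in ->] | /mapP [K1 K1in ->]];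
  have [K Kin sub] := h K1 K1in.
- by exists (K :&: A); [rewrite mem_cat (map_f (fun K => K :&: A) Kin) | apply: setSI].
- by exists (K :\: A); [rewrite mem_cat (map_f (fun K => K :\: A) Kin) orbT | apply: setSD].
Qed.

Lemma R_foldl n (C' C : dstate n) D : Rs C' C -> Rs (foldl (@stepf n) C' D) (foldl (@stepf n) C D).
Proof. by elim: D C' C => //= T D IH C' C h; apply: IH; apply: R_step. Qed.

Lemma R_ins n (C : dstate n) A : Rs (step C A) C.
Proof.
move=> K'; rewrite mem_cat => /orP [/mapP [K1 K1in ->] | /mapP [K1 K1in ->]];
  exists K1; rewrite ?subsetIl ?subsetDl //.
Qed.

Theorem mainTheorem10 (n : nat) (F Sa : formula n) (S : seq (formula n)) (i : nat) :
  1 <= i <= size S ->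
  revise_seq (F :: take i.-1 S ++ drop i.-1 S) = revise_seq (take i.-1 S ++ drop i.-1 S) ->
  revise_seq (F :: take i.-1 S ++ Sa :: drop i.-1 S) =
  revise_seq (take i.-1 S ++ Sa :: drop i.-1 S).
Proof.
move=> _; set T := take _ _; set D := drop _ _.
rewrite !revFE !revE !pairs => H.
have hall := split_all H.
apply: (split_eq (F' := mods F)); apply/allP => K' K'in.
have : Rs (Q (T ++ Sa :: D)) (Q (T ++ D)).
  by rewrite /Q !foldl_cat /=; apply: R_foldl; apply: R_ins.
move/(_ K' K'in) => [K Kin sub].
move/allP/(_ K Kin): hall; rewrite /good -!subset0 => /orP [h|h]; apply/orP.
- by left; apply: subset_trans h; apply: setIS.
- by right; apply: subset_trans h; apply: setIS.
Qed.
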